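(* Let $\mathcal{S}$ be a state space and let $\mathsf{M}^{(1)},\mathsf{M}^{(2)}$ be dichotomic measurements on $\mathcal{S}$ with outcomes $\{+,-\}$. Then $\bar P(\mathsf{M}^{(1)},\mathsf{M}^{(2)})=1$ if and only if there exist four states $s_1,s_2,s_3,s_4\in\mathcal{S}$ such that $\mathsf{M}^{(1)}$ discriminates $\{s_1,s_2\}$ and $\{s_3,s_4\}$ and $\mathsf{M}^{(2)}$ discriminates $\{s_1,s_4\}$ and $\{s_2,s_3\}$.
   Context: General probabilistic theory setting: a state space $\mathcal{S}$ is a compact convex subset of a finite-dimensional real vector space, embedded as a base of a closed generating proper cone in a vector space $V$, with unit effect $u$. Effects are linear functionals $e$ on $V$ with $0\le e\le1$ on $\mathcal{S}$; $\|f\|=\max_{s\in\mathcal{S}}|f(s)|$. A dichotomic measurement is a pair of effects $\mathsf{M}_+,\mathsf{M}_-$ with $\mathsf{M}_++\mathsf{M}_-=u$. For dichotomic $\mathsf{M}^{(1)},\mathsf{M}^{(2)}$, $\bar P(\mathsf{M}^{(1)},\mathsf{M}^{(2)})=\frac18\sum_{x,y\in\{+,-\}}\|\mathsf{M}^{(1)}_x+\mathsf{M}^{(2)}_y\|$. A dichotomic measurement $\mathsf{M}$ discriminates sets of states $S_+,S_-\subseteq\mathcal{S}$ if $\mathsf{M}_+(s)=1$ for all $s\in S_+$ and $\mathsf{M}_+(s)=0$ for all $s\in S_-$. *)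

(* Defs.v *)
From HB Require Import structures.
From mathcomp Require Import all_boot all_order all_algebra.
From mathcomp Require Import all_classical all_reals all_analysis.
Set Implicit Arguments. Unset Strict Implicit. Unset Printing Implicit Defensive.
Import Order.TTheory GRing.Theory Num.Theory.
Import numFieldNormedType.Exports.
Local Open Scope classical_set_scope.
Local Open Scope ring_scope.

(* Linear functionals on V are represented by their coefficient row vectors:
   the functional f acts by  ev f v = \sum_i f_i v_i. *)
Definition ev (R : realType) (n : nat) (f v : 'rV[R]_n) : R :=
  \sum_(i < n) f 0 i * v 0 i.

Definition convex_set (R : realType) (n : nat) (S : set 'rV[R]_n) : Prop :=
  forall x y, S x -> S y -> forall t : R, 0 <= t <= 1 -> S (t *: x + (1 - t) *: y).

(* S is a state space with unit effect u: S is a nonempty compact convex set,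
   which is the base (cut out by u = 1) of the cone {t s | t >= 0, s in S};
   this cone is closed and proper (automatic from compactness and u = 1 on S)
   and generating (every vector is a difference of two cone elements). *)
Definition state_space (R : realType) (n : nat) (S : set 'rV[R]_n) (u : 'rV[R]_n) : Prop :=
  [/\ S !=set0, compact S, convex_set S,
      (forall s, S s -> ev u s = 1) &
      (forall v : 'rV[R]_n, exists s1 s2 (t1 t2 : R),
          [/\ S s1, S s2, 0 <= t1, 0 <= t2 & v = t1 *: s1 - t2 *: s2])].

Definition effect (R : realType) (n : nat) (S : set 'rV[R]_n) (e : 'rV[R]_n) : Prop :=
  forall s, S s -> 0 <= ev e s <= 1.

Definition dichotomic (R : realType) (n : nat) (S : set 'rV[R]_n) (u Mp Mm : 'rV[R]_n) : Prop :=
  [/\ effect S Mp, effect S Mm & Mp + Mm = u].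

(* ||f|| = max_{s in S} |f(s)| (the max exists by compactness; written as sup). *)
Definition fnorm (R : realType) (n : nat) (S : set 'rV[R]_n) (f : 'rV[R]_n) : R :=
  sup [set `|ev f s| | s in S].

Definition Pbar (R : realType) (n : nat) (S : set 'rV[R]_n)
  (M1p M1m M2p M2m : 'rV[R]_n) : R :=
  8^-1 * (fnorm S (M1p + M2p) + fnorm S (M1p + M2m)
          + fnorm S (M1m + M2p) + fnorm S (M1m + M2m)).

Definition discriminates (R : realType) (n : nat) (Mp : 'rV[R]_n)
  (Splus Sminus : set 'rV[R]_n) : Prop :=
  (forall s, Splus s -> ev Mp s = 1) /\ (forall s, Sminus s -> ev Mp s = 0).

(* Main.v *)
Require Import Defs.
From HB Require Import structures.
From mathcomp Require Import all_boot all_order all_algebra.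
From mathcomp Require Import all_classical all_reals all_analysis.
From mathcomp Require Import lra.
Set Implicit Arguments. Unset Strict Implicit.
Import Order.TTheory GRing.Theory Num.Theory.
Import numFieldNormedType.Exports.
Local Open Scope classical_set_scope.
Local Open Scope ring_scope.
Lemma ev_cont (R : realType) n (g : 'rV[R]_n) : continuous (ev g).
Proof.
rewrite /ev.
have H := @continuous_big R^o 'I_n +%R 0 xpredT (@add_continuous R^o) _ (index_enum _) (fun i (x : 'rV[R]_n) => g 0 i * x 0 i).
have H2 : forall i : 'I_n, xpredT i -> continuous (fun (x : 'rV[R]_n) => (g 0 i * x 0 i : R^o)).
  move=> i _; move=> x; apply: (@continuous_comp _ _ _ (fun x : 'rV[R]_n => x 0 i) ( *%R (g 0 i))); [exact: coord_continuous | exact: mulrl_continuous].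
exact: (H H2).
Qed.
Lemma evD (R : realType) n (f g s : 'rV[R]_n) : ev (f + g) s = ev f s + ev g s.
Proof. by rewrite /ev -big_split; apply: eq_bigr => i _; rewrite !mxE mulrDl. Qed.

Lemma ev_sum_bnd (R : realType) n (S : set 'rV[R]_n) (e f s : 'rV[R]_n) :
  effect S e -> effect S f -> S s -> 0 <= ev (e + f) s <= 2.
Proof.
move=> he hf Ss; rewrite evD; have := he s Ss; have := hf s Ss.
move=> /andP[? ?] /andP[? ?]; apply/andP; split; lra.
Qed.

Lemma fnorm_le2 (R : realType) n (S : set 'rV[R]_n) (e f : 'rV[R]_n) :
  S !=set0 -> effect S e -> effect S f -> fnorm S (e + f) <= 2.
Proof.
move=> [s0 Ss0] he hf; apply: ge_sup; first by exists `|ev (e + f) s0|, s0.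
move=> _ [s Ss <-]; have /andP[h1 h2] := ev_sum_bnd he hf Ss.
by rewrite ger0_norm.
Qed.

Lemma fnorm_ge (R : realType) n (S : set 'rV[R]_n) (e f s : 'rV[R]_n) :
  effect S e -> effect S f -> S s -> `|ev (e + f) s| <= fnorm S (e + f).
Proof.
move=> he hf Ss; apply: ub_le_sup; last by exists s.
exists 2 => _ [t St <-]; have /andP[h1 h2] := ev_sum_bnd he hf St.
by rewrite ger0_norm.
Qed.

Lemma fnorm_attain (R : realType) n (S : set 'rV[R]_n) (e f : 'rV[R]_n) :
  S !=set0 -> compact S -> effect S e -> effect S f -> fnorm S (e + f) = 2 ->
  exists s, [/\ S s, ev e s = 1 & ev f s = 1].
Proof.
move=> S0 cS he hf h2.
have [c cS' cmax] := EVT_max_rV S0 cS (continuous_subspaceT (@ev_cont _ _ (e + f))).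
have Sc := set_mem cS'.
have : fnorm S (e + f) <= ev (e + f) c.
  apply: ge_sup; first by case: S0 => s0 Ss0; exists `|ev (e + f) s0|, s0.
  move=> _ [s Ss <-]; have /andP[h1 _] := ev_sum_bnd he hf Ss.
  by rewrite ger0_norm //; apply: cmax; rewrite inE.
rewrite h2 evD => hc; exists c; split => //.
  have := he c Sc; have := hf c Sc; move=> /andP[? ?] /andP[? ?]; lra.
have := he c Sc; have := hf c Sc; move=> /andP[? ?] /andP[? ?]; lra.
Qed.

Theorem proposition6 (R : realType) (n : nat) (S : set 'rV[R]_n) (u : 'rV[R]_n)
  (M1p M1m M2p M2m : 'rV[R]_n) :
  state_space S u ->
  dichotomic S u M1p M1m ->
  dichotomic S u M2p M2m ->
  (Pbar S M1p M1m M2p M2m = 1 <->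
   exists s1 s2 s3 s4 : 'rV[R]_n,
     [/\ S s1, S s2, S s3 & S s4] /\
     discriminates M1p [set s1; s2] [set s3; s4] /\
     discriminates M2p [set s1; s4] [set s2; s3]).
Proof.
move=> [S0 cS _ hu _] [e1p e1m hM1] [e2p e2m hM2].
have c1 s : S s -> ev M1p s + ev M1m s = 1 by move=> Ss; rewrite -evD hM1 hu.
have c2 s : S s -> ev M2p s + ev M2m s = 1 by move=> Ss; rewrite -evD hM2 hu.
rewrite /Pbar; split.
  move=> hP.
  have a1 := fnorm_le2 S0 e1p e2p; have a2 := fnorm_le2 S0 e1p e2m.
  have a3 := fnorm_le2 S0 e1m e2p; have a4 := fnorm_le2 S0 e1m e2m.
  have [s1 [S1 h11 h12]] : exists s, [/\ S s, ev M1p s = 1 & ev M2p s = 1].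
    by apply: fnorm_attain => //; lra.
  have [s2 [S2 h21 h22]] : exists s, [/\ S s, ev M1p s = 1 & ev M2m s = 1].
    by apply: fnorm_attain => //; lra.
  have [s3 [S3 h31 h32]] : exists s, [/\ S s, ev M1m s = 1 & ev M2m s = 1].
    by apply: fnorm_attain => //; lra.
  have [s4 [S4 h41 h42]] : exists s, [/\ S s, ev M1m s = 1 & ev M2p s = 1].
    by apply: fnorm_attain => //; lra.
  have := c1 _ S1; have := c1 _ S2; have := c1 _ S3; have := c1 _ S4.
  have := c2 _ S1; have := c2 _ S2; have := c2 _ S3; have := c2 _ S4.
  move=> q1 q2 q3 q4 q5 q6 q7 q8.
  exists s1, s2, s3, s4; split; first by [].
  split; split => x /= [] ->; lra.
move=> [s1 [s2 [s3 [s4 [[S1 S2 S3 S4] [[d11 d12] [d21 d22]]]]]]].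
have v1 := d11 s1 (or_introl erefl); have v2 := d11 s2 (or_intror erefl).
have v3 := d12 s3 (or_introl erefl); have v4 := d12 s4 (or_intror erefl).
have w1 := d21 s1 (or_introl erefl); have w4 := d21 s4 (or_intror erefl).
have w2 := d22 s2 (or_introl erefl); have w3 := d22 s3 (or_intror erefl).
have := c1 _ S3; have := c1 _ S4; have := c2 _ S2; have := c2 _ S3.
move=> q1 q2 q3 q4.
have b1 := fnorm_ge e1p e2p S1; have b2 := fnorm_ge e1p e2m S2.
have b3 := fnorm_ge e1m e2p S4; have b4 := fnorm_ge e1m e2m S3.
have a1 := fnorm_le2 S0 e1p e2p; have a2 := fnorm_le2 S0 e1p e2m.
have a3 := fnorm_le2 S0 e1m e2p; have a4 := fnorm_le2 S0 e1m e2m.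
rewrite !evD in b1 b2 b3 b4.
have -> : fnorm S (M1p + M2p) = 2.
  by apply/eqP; rewrite eq_le a1 /=; move: b1; rewrite v1 w1 ger0_norm //; lra.
have -> : fnorm S (M1p + M2m) = 2.
  by apply/eqP; rewrite eq_le a2 /=; move: b2; rewrite v2 ger0_norm; lra.
have -> : fnorm S (M1m + M2p) = 2.
  by apply/eqP; rewrite eq_le a3 /=; move: b3; rewrite w4 ger0_norm; lra.
have -> : fnorm S (M1m + M2m) = 2.
  by apply/eqP; rewrite eq_le a4 /=; move: b4; rewrite ger0_norm; lra.
lra.
Qed.
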